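(* Let $\gamma\geq0$, $G=(V,E,\omega)\in\mathcal C_\gamma$, $u_0,v_0\in\mathcal V$, and let $u,v:[0,\infty)\to\mathcal V$ be the solutions (continuously differentiable in $t$) of $\frac{du}{dt}=-Lu$, $u(0)=u_0$ and $\frac{dv}{dt}=-Lv$, $v(0)=v_0$. If $(u_0)_i\leq(v_0)_i$ for all $i\in V$, then $u_i(t)\leq v_i(t)$ for all $t\geq0$ and all $i\in V$.
   Context: $\mathcal{G}$ is the set of finite, simple, connected, undirected, edge-weighted graphs $G=(V,E,\omega)$ with $V=\{1,\dots,n\}$, $n\geq2$, weights $\omega_{ij}=\omega_{ji}>0$ on edges, $0$ otherwise. $d_i=\sum_j\omega_{ij}$. $\mathcal V$: functions $V\to\mathbb R$. Fixed $r\in[0,1]$: $(\Delta u)_i=d_i^{-r}\sum_j\omega_{ij}(u_i-u_j)$, $\mathcal M(u)=\sum_id_i^ru_i$, $\mathrm{vol}(V)=\sum_id_i^r$, $\mathcal A(u)=\frac{\mathcal M(u)}{\mathrm{vol}(V)}\chi_V$. For $u\in\mathcal V$ let $\varphi$ be the unique solution of $\Delta\varphi=u-\mathcal A(u)$, $\mathcal M(\varphi)=0$, and $Lu:=\Delta u+\gamma\varphi$ (a linear operator on $\mathcal V$). For a proper subset $S\subsetneq V$, the equilibrium measure $\nu^S$ is the unique $\nu\in\mathcal V$ with $(\Delta\nu)_i=1$ on $S$ and $\nu_i=0$ off $S$. $f^j:=\nu^{V\setminus\{j\}}-\mathcal A(\nu^{V\setminus\{j\}})$. $\mathcal C^0=\{G\in\mathcal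 G:\forall j\ \forall i\neq j:\ \omega_{ij}>0\text{ or }f^j_i\geq0\}$; for $\gamma>0$, $\mathcal C_\gamma=\{G\in\mathcal C^0:\forall j\ \forall i\neq j:\ \omega_{ij}=0\text{ or }d_i^{-r}\omega_{ij}+\gamma\frac{d_j^r}{\mathrm{vol}(V)}f^j_i>0\}$; $\mathcal C_0:=\mathcal G$. *)

(* Defs.v *)
From HB Require Import structures.
From mathcomp Require Import all_boot all_order all_algebra.
From mathcomp Require Import all_classical all_reals all_analysis.
From Stdlib Require Import ClassicalEpsilon.
Set Implicit Arguments. Unset Strict Implicit. Unset Printing Implicit Defensive.
Import Order.TTheory GRing.Theory Num.Theory.
Local Open Scope ring_scope.

Section GraphDefs.
Variables (R : realType) (n : nat).
Variable w : 'I_n -> 'I_n -> R.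

Definition is_graph : Prop :=
  [/\ (2 <= n)%N,
      (forall i j, w i j = w j i),
      (forall i j, 0 <= w i j),
      (forall i, w i i = 0) &
      (forall i j, connect (fun a b : 'I_n => 0 < w a b) i j)].

Definition deg (i : 'I_n) : R := \sum_(j < n) w i j.

Variable r : R.

Definition Delta (u : 'I_n -> R) : 'I_n -> R :=
  fun i => deg i `^ (- r) * \sum_(j < n) w i j * (u i - u j).

Definition mass (u : 'I_n -> R) : R := \sum_(i < n) deg i `^ r * u i.

Definition vol : R := \sum_(i < n) deg i `^ r.

Definition avg (u : 'I_n -> R) : 'I_n -> R := fun _ => mass u / vol.

Definition is_phi (u phi : 'I_n -> R) : Prop :=
  Delta phi = (fun i => u i - avg u i) /\ mass phi = 0.

(* "the unique solution" (its existence and uniqueness are facts about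
   connected graphs; we pick it with the choice operator) *)
Definition phi_of (u : 'I_n -> R) : 'I_n -> R :=
  epsilon (inhabits (fun _ => 0)) (is_phi u).

Variable gamma : R.

Definition Lop (u : 'I_n -> R) : 'I_n -> R :=
  fun i => Delta u i + gamma * phi_of u i.

Definition is_equilibrium (S : {set 'I_n}) (nu : 'I_n -> R) : Prop :=
  (forall i, i \in S -> Delta nu i = 1) /\ (forall i, i \notin S -> nu i = 0).

Definition equilibrium (S : {set 'I_n}) : 'I_n -> R :=
  epsilon (inhabits (fun _ => 0)) (is_equilibrium S).

Definition fj (j : 'I_n) : 'I_n -> R :=
  let nu := equilibrium (~: [set j]) in fun i => nu i - avg nu i.

Definition in_C0 : Prop :=
  forall j i : 'I_n, i != j -> 0 < w i j \/ 0 <= fj j i.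

Definition in_Cgamma : Prop :=
  if gamma == 0 then True else
  in_C0 /\
  forall j i : 'I_n, i != j ->
    w i j = 0 \/ 0 < deg i `^ (- r) * w i j + gamma * (deg j `^ r / vol) * fj j i.

End GraphDefs.

(* Main.v *)
Require Import Defs.
From HB Require Import structures.
From mathcomp Require Import all_boot all_order all_algebra.
From mathcomp Require Import all_classical all_reals all_analysis.
From mathcomp Require Import ring lra.
From Stdlib Require Import ClassicalEpsilon.
Import Order.TTheory GRing.Theory Num.Theory numFieldNormedType.Exports.
Local Open Scope ring_scope.
Local Open Scope classical_set_scope.
Set Implicit Arguments. Unset Strict Implicit.

Lemma exp_der (R : realType) (c t : R) :
  is_derive t 1 (fun s => expR (c * s)) (c * expR (c * t)).
Proof.
have h1 : is_derive t (1:R) (fun s : R => c * s) c.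
  have := is_deriveZ c (is_derive_id t (1:R)).
  by rewrite /GRing.scale /= mulr1.
have := is_derive1_comp (is_derive_expR (c * t)) h1.
by rewrite mulrC.
Qed.

Lemma exp_cont (R : realType) (c : R) : continuous (fun s : R => expR (c * s)).
Proof.
move=> x; apply: (@continuous_comp _ _ _ (fun s : R => c * s) expR).
  exact: mulrl_continuous.
exact: continuous_expR.
Qed.

Lemma pos_sys (R : realType) (n : nat) (A : 'I_n -> 'I_n -> R) (y : R -> 'I_n -> R) :
  (forall i j, 0 <= A i j) ->
  (forall i, {within [set s : R | 0 <= s], continuous (fun t => y t i)}) ->
  (forall i (t : R), 0 < t -> is_derive t 1 (fun s => y s i) (\sum_j A i j * y t j)) ->
  (forall i, 0 <= y 0 i) -> forall t, 0 <= t -> forall i, 0 <= y t i.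
Proof.
move=> A0 yc yd y0.
pose a := \sum_i \sum_j A i j.
have a0 : 0 <= a by apply: sumr_ge0 => i _; apply: sumr_ge0.
have rowa : forall i, \sum_j A i j <= a.
  move=> i; rewrite /a [X in _ <= X](bigD1 i) //= lerDl; apply: sumr_ge0 => k _; exact: sumr_ge0.
pose d := (2 * (a + 1))^-1.
have d0 : 0 < d by rewrite invr_gt0; lra.
have ad : a * d <= 2^-1.
  rewrite /d ler_pdivrMr; last lra.
  lra.
have step : forall k : nat, forall t, 0 <= t <= k%:R * d -> forall i, 0 <= y t i.
  elim=> [|k IH] t.
    by rewrite mul0r => /andP[t0 t0']; have -> : t = 0 by apply/eqP; rewrite eq_le t0 t0'.
  move=> /andP[t0 tk].
  have [tk'|tk'] := leP t (k%:R * d); first by apply: IH; rewrite t0 tk'.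
  pose lo := k%:R * d; pose hi := k.+1%:R * d.
  have lo0 : 0 <= lo by rewrite /lo mulr_ge0 // ltW.
  have lohi : lo <= hi by rewrite /lo /hi ler_pM2r // ler_nat.
  have hilo : hi = lo + d by rewrite /hi /lo -nat1r mulrDl mul1r addrC.
  have sub : `[lo, hi] `<=` [set s : R | 0 <= s].
    move=> s; rewrite /= in_itv /= => /andP[+ _]; exact: le_trans.
  have ex : forall i, exists s, s \in `[lo, hi]%R /\ forall t, t \in `[lo, hi]%R -> y s i <= y t i.
    move=> i; have [s s1 s2] := EVT_min lohi (continuous_subspaceW sub (yc i)).
    by exists s; split.
  have [s hs] := boolp.choice ex.
  pose B := \big[Order.max/0]_i (- y (s i) i).
  have B0 : 0 <= B by apply: bigmax_ge_id.
  have Bl : forall i t, t \in `[lo, hi]%R -> - B <= y t i.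
    move=> i t' ht'; have [_ /(_ t' ht') h] := hs i.
    apply: le_trans h; rewrite lerNl; rewrite /B; exact: (le_bigmax _ (fun j => - y (s j) j) i).
  have Bh : B <= B / 2.
    apply: bigmax_le; first by rewrite divr_ge0.
    move=> i _; have [si _] := hs i.
    move: (si); rewrite in_itv /= => /andP[si1 si2].
    have [e|lt] := eqVneq (s i) lo.
      rewrite e lerNl; apply: le_trans (IH lo _ i); first by rewrite oppr_le0 divr_ge0.
      by rewrite lo0 lexx.
    have lt' : lo < s i by rewrite lt_neqAle eq_sym lt si1.
    have dpos : forall x, x \in `]lo, s i[%R ->
        is_derive x 1 (fun t => y t i) (\sum_j A i j * y x j).
      move=> x; rewrite in_itv /= => /andP[lx _]; apply: yd; exact: le_lt_trans lo0 lx.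
    have sub' : `[lo, s i] `<=` [set s : R | 0 <= s].
      move=> x; rewrite /= in_itv /= => /andP[+ _]; exact: le_trans.
    have [c hc eq] := MVT lt' dpos (continuous_subspaceW sub' (yc i)).
    move: hc; rewrite in_itv /= => /andP[c1 c2].
    have cin : c \in `[lo, hi]%R by rewrite in_itv /= (ltW c1) /= (le_trans (ltW c2)).
    have hD : - (a * B) <= \sum_j A i j * y c j.
      apply: le_trans (_ : \sum_j A i j * (- B) <= _); last first.
        apply: ler_sum => j _; apply: ler_wpM2l; [exact: A0|exact: Bl].
      by rewrite -big_distrl /= mulrN lerN2 mulrC [a * B]mulrC ler_wpM2l.
    have ylo : 0 <= y lo i by apply: IH; rewrite lo0 lexx.
    have h0 : 0 <= s i - lo by rewrite subr_ge0.
    have hle : s i - lo <= d by rewrite lerBlDl -hilo.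
    have h1 := ler_wpM2r h0 hD.
    have h2 : (a*B) * (s i - lo) <= (a*B) * d := ler_wpM2l (mulr_ge0 a0 B0) hle.
    have h3 : (a*B)*d <= B/2 by rewrite mulrAC mulrC ler_wpM2l.
    lra.
  have Bz : B <= 0 by lra.
  move=> i; have := Bl i t; rewrite in_itv /= (ltW tk') tk => /(_ isT).
  lra.
move=> t t0 i.
have td : 0 <= t / d by rewrite divr_ge0 // ltW.
have := archi_boundP td; set k := Num.bound _ => hk.
apply: (step k); rewrite t0 /=.
by rewrite -ler_pdivrMr // ltW.
Qed.

Lemma metzler_cmp (R : realType) (n : nat) (M : 'I_n -> 'I_n -> R) (z : R -> 'I_n -> R) :
  (forall i j, i != j -> M i j <= 0) ->
  (forall i, {within [set s : R | 0 <= s], continuous (fun t => z t i)}) ->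
  (forall i (t : R), 0 < t -> is_derive t 1 (fun s => z s i) (- \sum_j M i j * z t j)) ->
  (forall i, 0 <= z 0 i) -> forall t, 0 <= t -> forall i, 0 <= z t i.
Proof.
move=> Mle zc zd z0.
pose c := \sum_i `|M i i|.
pose A i j := (i == j)%:R * c - M i j.
have hA : forall i j, 0 <= A i j.
  move=> i j; rewrite /A; have [->|nij] := eqVneq i j.
    rewrite mul1r subr_ge0; apply: le_trans (ler_norm _) _.
    by rewrite /c (bigD1 j) //= lerDl sumr_ge0.
  by rewrite mul0r sub0r oppr_ge0 Mle.
pose y t i := expR (c * t) * z t i.
have := @pos_sys R n A y hA.
have yc : forall i, {within [set s : R | 0 <= s], continuous (fun t => y t i)}.
  have e : {within [set s : R | 0 <= s], continuous (fun t => expR (c * t))} := continuous_subspaceT (@exp_cont R c).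
  move=> i x; exact: (continuousM (e x) (zc i x)).
have yd : forall i (t : R), 0 < t -> is_derive t 1 (fun s => y s i) (\sum_j A i j * y t j).
  move=> i t ht; have := is_deriveM (@exp_der R c t) (zd i t ht).
  move=> H; eapply is_derive_eq; first exact: H.
  rewrite /A /y.
  rewrite [RHS](eq_bigr (fun j => (i == j)%:R * c * (expR (c * t) * z t j) -
     expR (c * t) * (M i j * z t j))); last first.
    move=> j _; ring.
  rewrite sumrB -big_distrr /=.
  have hs : \sum_j (i == j)%:R * c * (expR (c*t) * z t j) = c * (expR (c*t) * z t i).
    rewrite (bigD1 i) //= big1 ?addr0 ?eqxx ?mul1r //.
    by move=> j ji; rewrite eq_sym (negbTE ji) !mul0r.
  rewrite hs /GRing.scale /=; ring.
move=> /(_ yc yd).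
have y0 : forall i, 0 <= y 0 i by move=> i; rewrite /y mulr0 expR0 mul1r.
move=> /(_ y0) H t t0 i; have := H t t0 i.
by rewrite /y pmulr_rge0 // expR_gt0.
Qed.

Lemma deg_gt0 (R : realType) n (w : 'I_n -> 'I_n -> R) :
  is_graph w -> forall i, 0 < deg w i.
Proof.
move=> [n2 ws wp w0 wc] i.
have [k ki] : exists k : 'I_n, k != i.
  have n0 : (0 < n)%N by apply: leq_trans n2.
  have n1 : (1 < n)%N by [].
  case: (eqVneq i (Ordinal n0)) => [e|ne]; last by exists (Ordinal n0); rewrite eq_sym.
  exists (Ordinal n1); apply/eqP => /(congr1 val); rewrite e /=. by [].
have /connectP [p pth lst] := wc i k.
case: p pth lst => [|a p] /=; first by move=> _ e; rewrite e eqxx in ki.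
move=> /andP [wia _] _.
rewrite /deg (bigD1 a) //=; apply: (lt_le_trans wia); rewrite lerDl.
by apply: sumr_ge0.
Qed.

Lemma powK (R : realType) (d r : R) : 0 < d -> d `^ (- r) * d `^ r = 1.
Proof. by move=> d0; rewrite powRN mulVf // gt_eqF // powR_gt0. Qed.

Lemma vol_gt0 (R : realType) n (w : 'I_n -> 'I_n -> R) r :
  is_graph w -> 0 < vol w r.
Proof.
move=> hg; have [n2 _ _ _ _] := hg.
have n0 : (0 < n)%N by apply: leq_trans n2.
rewrite /vol (bigD1 (Ordinal n0)) //=.
apply: (@lt_le_trans _ _ (deg w (Ordinal n0) `^ r)); first by rewrite powR_gt0 // deg_gt0.
by rewrite lerDl; apply: sumr_ge0 => i _; rewrite powR_ge0.
Qed.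

Lemma sum_antisym (R : realType) n (w : 'I_n -> 'I_n -> R) (u : 'I_n -> R) :
  (forall i j, w i j = w j i) ->
  \sum_i \sum_j w i j * (u i - u j) = 0.
Proof.
move=> ws.
have e : \sum_i \sum_j w i j * (u i - u j) = \sum_i \sum_j w i j * (u j - u i).
  rewrite exchange_big /=; apply: eq_bigr => i _; apply: eq_bigr => j _.
  by rewrite ws.
have e2 : \sum_i \sum_j w i j * (u j - u i) = - \sum_i \sum_j w i j * (u i - u j).
  rewrite -sumrN; apply: eq_bigr => i _; rewrite -sumrN; apply: eq_bigr => j _.
  ring.
move: e; rewrite e2 => e; lra.
Qed.

Lemma mass_Delta (R : realType) n (w : 'I_n -> 'I_n -> R) r (u : 'I_n -> R) :
  is_graph w -> mass w r (Delta w r u) = 0.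
Proof.
move=> hg; have [_ ws _ _ _] := hg.
rewrite /mass /Delta -[RHS](@sum_antisym R n w u ws); apply: eq_bigr => i _.
by rewrite mulrA (mulrC (deg w i `^ r)) powK ?mul1r // deg_gt0.
Qed.

Lemma energy (R : realType) n (w : 'I_n -> 'I_n -> R) (u : 'I_n -> R) :
  is_graph w ->
  (forall i, u i * \sum_j w i j * (u i - u j) = 0) -> forall i j, u i = u j.
Proof.
move=> [n2 ws wp w0 wc] h.
have S1 : \sum_i \sum_j w i j * (u i * (u i - u j)) = 0.
  rewrite big1 // => i _; apply: (etrans _ (h i)); rewrite mulr_sumr; apply: eq_bigr => j _; ring.
have S2 : \sum_i \sum_j w i j * (u j * (u j - u i)) = 0.
  rewrite exchange_big /= -[RHS]S1; apply: eq_bigr => i _; apply: eq_bigr => j _.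
  by rewrite ws.
have S3 : \sum_i \sum_j w i j * (u i - u j) ^+ 2 = 0.
  rewrite -[RHS](addr0 0).
  rewrite -[X in _ = X + _]S1 -[X in _ = _ + X]S2 -big_split /=; apply: eq_bigr => i _.
  rewrite -big_split /=; apply: eq_bigr => j _; ring.
have T : forall i j, w i j * (u i - u j) ^+ 2 = 0.
  have P0 : forall i : 'I_n, true -> 0 <= \sum_j w i j * (u i - u j) ^+ 2.
    by move=> i _; apply: sumr_ge0 => k _; exact: mulr_ge0 (wp i k) (sqr_ge0 _).
  have H1 := psumr_eq0P P0 S3.
  move=> i j; apply: (psumr_eq0P _ (H1 i isT)) => // k _.
  exact: mulr_ge0 (wp i k) (sqr_ge0 _).
have E : forall i j, 0 < w i j -> u i = u j.
  move=> i j wij; have := T i j; move/eqP; rewrite mulf_eq0 gt_eqF //= sqrf_eq0 subr_eq0.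
  by move/eqP.
move=> i j.
have := @closed_connect _ (fun a b : 'I_n => 0 < w a b) [pred k | u k == u i].
move=> /(_ _ i j (wc i j)) /=.
rewrite !inE eqxx => H; apply/esym/eqP; rewrite -H //.
by move=> a b /= /E; rewrite !inE => ->.
Qed.

Lemma sum_delta (R : realType) n (f : 'I_n -> R) (i : 'I_n) :
  \sum_k f k * (k == i)%:R = f i.
Proof.
rewrite (bigD1 i) //= eqxx mulr1 big1 ?addr0 // => k /negbTE ->; by rewrite mulr0.
Qed.

Lemma rowcomp (R : realType) n (w : 'I_n -> 'I_n -> R) (u : 'I_n -> R) i :
  \sum_k u k * ((k == i)%:R * deg w i - w i k) = \sum_k w i k * (u i - u k).
Proof.
have -> : \sum_k u k * ((k == i)%:R * deg w i - w i k) =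
   (\sum_k u k * (k == i)%:R) * deg w i - \sum_k w i k * u k.
  rewrite big_distrl -sumrB; apply: eq_bigr => k _ /=; ring.
rewrite sum_delta /deg big_distrr -sumrB; apply: eq_bigr => k _ /=; ring.
Qed.

Lemma equil_ex (R : realType) n (w : 'I_n -> 'I_n -> R) r (j : 'I_n) :
  is_graph w -> exists nu, is_equilibrium w r (~: [set j]) nu.
Proof.
move=> hg.
pose A : 'M[R]_n := \matrix_(k, i) (if i == j then (k == i)%:R
                                     else (k == i)%:R * deg w i - w i k).
have Ainj : forall v : 'rV_n, v *m A = 0 -> v = 0.
  move=> v vA; pose u k := v 0 k.
  have hu : forall i, \sum_k u k * A k i = 0.
    by move=> i; have := congr1 (fun M : 'M[R]_(1, n) => M 0 i) vA; rewrite !mxE.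
  have uj : u j = 0.
    have := hu j; under eq_bigr do rewrite mxE eqxx.
    by rewrite sum_delta.
  have hi : forall i, i != j -> \sum_k w i k * (u i - u k) = 0.
    move=> i ij; have := hu i; under eq_bigr do rewrite mxE (negbTE ij).
    by rewrite rowcomp.
  have hE : forall i, u i * \sum_k w i k * (u i - u k) = 0.
    move=> i; have [->|ij] := eqVneq i j; first by rewrite uj mul0r.
    by rewrite hi // mulr0.
  have := energy hg hE => ue.
  apply/rowP => k; rewrite mxE; have := ue k j; rewrite uj; by [].
have detA : \det A != 0.
  apply/negP => /det0P [v vn0 vA]; by rewrite (Ainj v vA) eqxx in vn0.
have Au : A \in unitmx by rewrite unitmxE unitfE.
pose b : 'rV[R]_n := \row_i (if i == j then 0 else deg w i `^ r).
pose x := b *m invmx A.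
have xA : x *m A = b by rewrite /x mulmxKV.
exists (fun i => x 0 i); split.
- move=> i; rewrite !inE => ij.
  have := congr1 (fun M : 'M[R]_(1, n) => M 0 i) xA; rewrite !mxE (negbTE ij).
  move=> e; rewrite /Delta -(rowcomp w (fun k => x 0 k) i).
  have -> : \sum_k x 0 k * ((k == i)%:R * deg w i - w i k) = \sum_k x 0 k * A k i.
    by apply: eq_bigr => k _; rewrite [A _ _]mxE (negbTE ij).
  by rewrite e powK // deg_gt0.
- move=> i; rewrite !inE negbK => /eqP ->.
  have := congr1 (fun M : 'M[R]_(1, n) => M 0 j) xA; rewrite !mxE eqxx.
  move=> e; apply: (etrans _ e); transitivity (\sum_k x 0 k * (k == j)%:R); first by rewrite sum_delta /x mxE.
  by apply: eq_bigr => k _; rewrite [A _ _]mxE eqxx.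
Qed.

Lemma equil_spec (R : realType) n (w : 'I_n -> 'I_n -> R) r (j : 'I_n) :
  is_graph w -> is_equilibrium w r (~: [set j]) (equilibrium w r (~: [set j])).
Proof. by move=> hg; apply: epsilon_spec; exact: equil_ex. Qed.

Lemma Delta_equil (R : realType) n (w : 'I_n -> 'I_n -> R) r (j i : 'I_n) :
  is_graph w -> Delta w r (equilibrium w r (~: [set j])) i =
    1 - (i == j)%:R * vol w r / deg w j `^ r.
Proof.
move=> hg; have [h1 h2] := equil_spec r j hg.
set nu := equilibrium w r (~: [set j]) in h1 h2 *.
have [->|ij] := eqVneq i j; last first.
  by rewrite h1 ?mul0r ?mul0r ?subr0 // !inE.
have m := mass_Delta r nu hg.
move: m; rewrite /mass (bigD1 j) //=.
rewrite (eq_bigr (fun k => deg w k `^ r)); last first.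
  by move=> k kj; rewrite h1 ?mulr1 // !inE.
move=> m; rewrite /vol (bigD1 j) //= mul1r.
have dj : deg w j `^ r != 0 by rewrite gt_eqF // powR_gt0 // deg_gt0.
have e : deg w j `^ r * Delta w r nu j = - \sum_(i < n | i != j) deg w i `^ r by lra.
apply: (mulfI dj); rewrite e; field; exact: dj.
Qed.

Lemma Delta_shift (R : realType) n (w : 'I_n -> 'I_n -> R) r (f : 'I_n -> R) c i :
  Delta w r (fun k => f k - c) i = Delta w r f i.
Proof. rewrite /Delta; congr (_ * _); apply: eq_bigr => k _; ring. Qed.

Lemma Delta_fj (R : realType) n (w : 'I_n -> 'I_n -> R) r (j i : 'I_n) :
  is_graph w -> Delta w r (fj w r j) i = 1 - (i == j)%:R * vol w r / deg w j `^ r.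
Proof. by move=> hg; rewrite /fj /avg Delta_shift Delta_equil. Qed.

Lemma mass_fj (R : realType) n (w : 'I_n -> 'I_n -> R) r (j : 'I_n) :
  is_graph w -> mass w r (fj w r j) = 0.
Proof.
move=> hg; rewrite /fj /avg /mass /=.
set nu := equilibrium w r (~: [set j]).
set m := (\sum_(i < n) deg w i `^ r * nu i) / vol w r.
have -> : \sum_i deg w i `^ r * (nu i - m) = \sum_i deg w i `^ r * nu i - m * vol w r.
  by rewrite /vol mulr_sumr -sumrB; apply: eq_bigr => i _; ring.
have v0 : vol w r != 0 by rewrite gt_eqF // vol_gt0.
by rewrite /m mulfVK // subrr.
Qed.

Lemma Delta_lin (R : realType) n (w : 'I_n -> 'I_n -> R) r (c : 'I_n -> R)
    (g : 'I_n -> 'I_n -> R) i :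
  Delta w r (fun k => \sum_j c j * g j k) i = \sum_j c j * Delta w r (g j) i.
Proof.
rewrite /Delta.
under [RHS]eq_bigr do rewrite mulrCA.
rewrite -mulr_sumr; congr (_ * _).
under eq_bigr do rewrite -sumrB mulr_sumr.
rewrite exchange_big /=; apply: eq_bigr => j _; rewrite mulr_sumr.
apply: eq_bigr => k _; ring.
Qed.

Definition psi (R : realType) n (w : 'I_n -> 'I_n -> R) r (z : 'I_n -> R) : 'I_n -> R :=
  fun i => \sum_j (- (z j * (deg w j `^ r / vol w r))) * fj w r j i.

Lemma psi_phi (R : realType) n (w : 'I_n -> 'I_n -> R) r (z : 'I_n -> R) :
  is_graph w -> is_phi w r z (psi w r z).
Proof.
move=> hg.
have v0 : vol w r != 0 by rewrite gt_eqF // vol_gt0.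
split.
  apply/funext => i; rewrite /psi Delta_lin.
  under eq_bigr do rewrite Delta_fj //.
  rewrite (eq_bigr (fun j => - (deg w j `^ r * z j) / vol w r + z j * (j == i)%:R)); last first.
    move=> j _; have dj : deg w j `^ r != 0 by rewrite gt_eqF // powR_gt0 // deg_gt0.
    have [e|ij] := eqVneq i j; first by subst i; rewrite /=; field; rewrite dj v0.
    by rewrite /= !mul0r mulr0 subr0 addr0 mulr1; field.
  rewrite big_split /= sum_delta /avg /mass -mulNr -sumrN -mulr_suml /=.
  by rewrite addrC.
rewrite /mass /psi.
under eq_bigr do rewrite mulr_sumr.
rewrite exchange_big /= big1 // => j _.
have := mass_fj r j hg; rewrite /mass => e.
rewrite (eq_bigr (fun i => (- (z j * (deg w j `^ r / vol w r))) *
   (deg w i `^ r * fj w r j i))); last by move=> i _; ring.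
by rewrite -mulr_sumr e mulr0.
Qed.

Lemma phi_unique (R : realType) n (w : 'I_n -> 'I_n -> R) r (z p q : 'I_n -> R) :
  is_graph w -> is_phi w r z p -> is_phi w r z q -> p = q.
Proof.
move=> hg [dp mp] [dq mq].
pose x k := p k - q k.
have hx : forall i, x i * \sum_k w i k * (x i - x k) = 0.
  move=> i.
  have e : Delta w r x i = 0.
    have := congr1 (fun f => f i) dp; have := congr1 (fun f => f i) dq.
    rewrite /Delta /x => e1 e2.
    have -> : \sum_j w i j * (p i - q i - (p j - q j)) =
        \sum_j w i j * (p i - p j) - \sum_j w i j * (q i - q j).
      by rewrite -sumrB; apply: eq_bigr => j _; ring.
    by rewrite mulrBr e1 e2 subrr.
  move: e; rewrite /Delta => /eqP; rewrite mulf_eq0 gt_eqF ?powR_gt0 ?deg_gt0 //=.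
  by move/eqP => ->; rewrite mulr0.
have ex := energy hg hx.
apply/funext => i; apply/eqP; rewrite -subr_eq0; apply/eqP.
have hm : mass w r x = x i * vol w r.
  rewrite /mass /vol mulr_sumr; apply: eq_bigr => k _; rewrite (ex k i); ring.
have : mass w r x = 0.
  rewrite /mass /x.
  have -> : \sum_i deg w i `^ r * (p i - q i) = mass w r p - mass w r q.
    by rewrite /mass -sumrB; apply: eq_bigr => k _; ring.
  by rewrite mp mq subrr.
rewrite hm => /eqP; rewrite mulf_eq0 (gt_eqF (vol_gt0 r hg)) orbF => /eqP.
by [].
Qed.

Lemma phi_of_eq (R : realType) n (w : 'I_n -> 'I_n -> R) r (z : 'I_n -> R) :
  is_graph w -> phi_of w r z = psi w r z.
Proof.
move=> hg; apply: (phi_unique hg _ (psi_phi r z hg)).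
by apply: epsilon_spec; exists (psi w r z); exact: psi_phi.
Qed.

Definition Mx (R : realType) n (w : 'I_n -> 'I_n -> R) r gamma (i j : 'I_n) : R :=
  deg w i `^ (- r) * ((i == j)%:R * deg w i - w i j)
  - gamma * (deg w j `^ r / vol w r) * fj w r j i.

Lemma Lop_lin (R : realType) n (w : 'I_n -> 'I_n -> R) r gamma (x : 'I_n -> R) i :
  is_graph w -> Lop w r gamma x i = \sum_j Mx w r gamma i j * x j.
Proof.
move=> hg; rewrite /Lop phi_of_eq // /psi /Delta -rowcomp /Mx.
under [RHS]eq_bigr do rewrite mulrBl.
rewrite sumrB; congr (_ + _).
  rewrite mulr_sumr; apply: eq_bigr => j _; rewrite eq_sym; ring.
rewrite mulr_sumr -sumrN; apply: eq_bigr => j _; ring.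
Qed.

Lemma Mx_metzler (R : realType) n (w : 'I_n -> 'I_n -> R) r gamma :
  is_graph w -> 0 <= gamma -> in_Cgamma w r gamma ->
  forall i j, i != j -> Mx w r gamma i j <= 0.
Proof.
move=> hg g0 hC i j ij.
have [_ _ wp _ _] := hg.
have dr : 0 < deg w i `^ (- r) by rewrite powR_gt0 // deg_gt0.
have cj : 0 <= deg w j `^ r / vol w r by rewrite divr_ge0 ?powR_ge0 // ltW // vol_gt0.
rewrite /Mx (negbTE ij) mul0r sub0r.
have [g00|gn0] := eqVneq gamma 0.
  rewrite g00 !mul0r subr0 mulrN oppr_le0; exact: mulr_ge0 (ltW dr) (wp i j).
move: hC; rewrite /in_Cgamma (negbTE gn0) => -[C0 C1].
have [wz|pos] := C1 j i ij.
  have [wpos|fpos] := C0 j i ij; first by rewrite wz ltxx in wpos.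
  rewrite wz oppr0 mulr0 sub0r oppr_le0; apply: mulr_ge0 => //; exact: mulr_ge0.
have := pos; lra.
Qed.

Theorem lemma6p27 (R : realType) (n : nat) (w : 'I_n -> 'I_n -> R) (r gamma : R)
  (u0 v0 : 'I_n -> R) (u v : R -> 'I_n -> R) :
  is_graph w -> 0 <= r -> r <= 1 -> 0 <= gamma -> in_Cgamma w r gamma ->
  (* u solves du/dt = -L u on [0, oo), u(0) = u0 *)
  u 0 = u0 ->
  (forall i, {within [set s : R | 0 <= s], continuous (fun t => u t i)}) ->
  (forall i (t : R), 0 < t -> is_derive t (1 : R) (fun s => u s i) (- Lop w r gamma (u t) i)) ->
  (* v solves dv/dt = -L v on [0, oo), v(0) = v0 *)
  v 0 = v0 ->
  (forall i, {within [set s : R | 0 <= s], continuous (fun t => v t i)}) ->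
  (forall i (t : R), 0 < t -> is_derive t (1 : R) (fun s => v s i) (- Lop w r gamma (v t) i)) ->
  (forall i, u0 i <= v0 i) ->
  forall t : R, 0 <= t -> forall i, u t i <= v t i.
Proof.
move=> hg r0 r1 g0 hC hu0 uc ud hv0 vc vd le0 t t0 i.
pose z s k := v s k - u s k.
have zc : forall k, {within [set s : R | 0 <= s], continuous (fun s => z s k)}.
  move=> k x; exact: continuousB (vc k x) (uc k x).
have zd : forall k (s : R), 0 < s ->
    is_derive s 1 (fun s => z s k) (- \sum_j Mx w r gamma k j * z s j).
  move=> k s hs; have := is_deriveB (vd k s hs) (ud k s hs).
  move=> H; eapply is_derive_eq; first exact: H.
  rewrite !Lop_lin // /z.
  have -> : \sum_j Mx w r gamma k j * (v s j - u s j) =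
      \sum_j Mx w r gamma k j * v s j - \sum_j Mx w r gamma k j * u s j.
    by rewrite -sumrB; apply: eq_bigr => j _; rewrite mulrBr.
  by rewrite opprB opprK addrC.
have z0 : forall k, 0 <= z 0 k by move=> k; rewrite /z hu0 hv0 subr_ge0.
have := metzler_cmp (Mx_metzler hg g0 hC) zc zd z0 t0 i.
by rewrite /z subr_ge0.
Qed.
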